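(* Consider the semi-discrete DG scheme described in the context, with zero-flux boundary conditions, and let $(u_h(t),q_h(t))\in V_h\times V_h$ be a (differentiable in $t$) solution on some time interval with $f(u_h)\ge 0$ on $\Omega$. Define the semi-discrete entropy $$E(t)=\sum_{j=1}^N\int_{I_j}\big(\Phi(x)u_h(x,t)+H(u_h(x,t))\big)\,dx .$$ If the flux parameters satisfy $\beta_0>\Gamma(\beta_1)$, where $$\Gamma(\beta_1):=\max_{1\le j\le N-1}\frac{\{f(u_h)\}\left(\{\partial_x q_h\}+\frac{\beta_1}{2}h[\partial_x^2 q_h]\right)^2\Big|_{x_{j+1/2}}}{\frac{1}{2h}\left(\int_{I_j}+\int_{I_{j+1}}\right)f(u_h)|\partial_x q_h|^2\,dx}$$ (with $h$ the interface mesh size at $x_{j+1/2}$ and all denominators assumed positive), then $$\frac{d}{dt}E(t)\le -\gamma\,\|q_h\|_E^2,\qquad \gamma=1-\sqrt{\Gamma(\beta_1)/\beta_0}\in(0,1).$$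
   Context: Let $\Omega=[a,b]$ with mesh $a=x_{1/2}<x_{3/2}<\dots<x_{N+1/2}=b$, cells $I_j=(x_{j-1/2},x_{j+1/2})$, $\Delta x_j=x_{j+1/2}-x_{j-1/2}$; at the interface $x_{j+1/2}$ the mesh size is $h=(\Delta x_j+\Delta x_{j+1})/2$ (on a uniform mesh $h=\Delta x$). For $k\ge 1$, $V_h=\{v\in L^2(\Omega): v|_{I_j}\in P^k(I_j),\ j=1,\dots,N\}$, $P^k$ being polynomials of degree at most $k$. At an interior interface, $v^\pm$ denote right/left limits, $[v]=v^+-v^-$, $\{v\}=(v^++v^-)/2$. Given functions $\Phi:\Omega\to\mathbb R$, $H:(0,\infty)\to\mathbb R$ ($C^1$) and $f\ge 0$, the semi-discrete DG scheme (for $\partial_t u=\partial_x(f(u)\partial_x q)$, $q=\Phi+H'(u)$) with zero-flux boundary conditions is: find $u_h(t),q_h(t)\in V_h$ such that for all $v,r\in V_h$, $$\int_\Omega \partial_t u_h\, v\,dx=-\sum_{j=1}^N\int_{I_j} f(u_h)\partial_x q_h\,\partial_x v\,dx-\sum_{j=1}^{N-1}\{f(u_h)\}\Big(\widehat{\partial_x q_h}\,[v]+\{\partial_x v\}[q_h]\Big)\Big|_{x_{j+1/2}},$$ $$\int_\Omega q_h r\,dx=\int_\Omega(\Phi(x)+H'(u_h))\,r\,dx,$$ with numerical flux at $x_{j+1/2}$: $\widehat{\partial_x q_h}=\beta_0\frac{[q_h]}{h}+\{\partial_x q_h\}+\beta_1 h[\partial_x^2 q_h]$, where $\beta_0,\beta_1$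 are real parameters. The energy norm is $$\|q_h\|_E^2=\sum_{j=1}^N\int_{I_j}f(u_h)|\partial_x q_h|^2dx+\sum_{j=1}^{N-1}\{f(u_h)\}\frac{\beta_0}{h}[q_h]^2\Big|_{x_{j+1/2}}.$$ *)

(* Defs.v *)
From Stdlib Require Import Reals Lra ClassicalEpsilon.
Open Scope R_scope.

Fixpoint sumR (n : nat) (F : nat -> R) : R :=
  match n with O => 0 | S m => sumR m F + F (S m) end.

(* max_{j=1}^n F j  (only meaningful for n >= 1) *)
Fixpoint maxR (n : nat) (F : nat -> R) : R :=
  match n with
  | O => 0
  | S O => F 1%nat
  | S m => Rmax (maxR m F) (F n)
  end.

(* Riemann integral of g over [lo,hi] (value chosen when g is integrable) *)
Definition Rint (g : R -> R) (lo hi : R) : R :=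
  epsilon (inhabits 0)
    (fun I => exists pr : Riemann_integrable g lo hi, RiemannInt pr = I).

Definition pev (k : nat) (a : nat -> R) (y : R) : R :=
  sum_f_R0 (fun i => a i * y ^ i) k.
Definition dpev (k : nat) (a : nat -> R) (y : R) : R :=
  sum_f_R0 (fun i => INR i * a i * y ^ (pred i)) k.
Definition d2pev (k : nat) (a : nat -> R) (y : R) : R :=
  sum_f_R0 (fun i => INR i * INR (pred i) * a i * y ^ (i - 2)) k.

(* An element of V_h: c j i = coefficient of y^i of the polynomial on the
   cell I_j = (x (j-1), x j), j = 1..N.  Mesh points x 0 = a < ... < x N = b;
   x j is the interface x_{j+1/2}. *)
Definition Vh := (nat -> nat -> R)%type.

Definition cellint (x : nat -> R) (j : nat) (g : R -> R) : R :=
  Rint g (x (pred j)) (x j).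

Definition meshh (x : nat -> R) (j : nat) : R :=
  ((x j - x (pred j)) + (x (S j) - x j)) / 2.

(* one-sided limits at interface j : minus = from cell j, plus = from cell j+1 *)
Definition vm k x (c : Vh) j := pev k (c j) (x j).
Definition vp k x (c : Vh) j := pev k (c (S j)) (x j).
Definition jmp k x (c : Vh) j := vp k x c j - vm k x c j.
Definition avg k x (c : Vh) j := (vp k x c j + vm k x c j) / 2.
Definition dvm k x (c : Vh) j := dpev k (c j) (x j).
Definition dvp k x (c : Vh) j := dpev k (c (S j)) (x j).
Definition djmp k x (c : Vh) j := dvp k x c j - dvm k x c j.
Definition davg k x (c : Vh) j := (dvp k x c j + dvm k x c j) / 2.
Definition d2jmp k x (c : Vh) j :=
  d2pev k (c (S j)) (x j) - d2pev k (c j) (x j).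

Definition favg (f : R -> R) k x (u : Vh) j :=
  (f (vp k x u j) + f (vm k x u j)) / 2.

Definition flux (b0 b1 : R) k x (q : Vh) j :=
  b0 * jmp k x q j / meshh x j + davg k x q j
  + b1 * meshh x j * d2jmp k x q j.

(* first equation of the scheme; du = coefficients of d/dt u_h *)
Definition scheme_eq1 (N k : nat) (x : nat -> R) (f : R -> R) (b0 b1 : R)
  (du u q : Vh) : Prop :=
  forall v : Vh,
    sumR N (fun j => cellint x j (fun y => pev k (du j) y * pev k (v j) y))
    = - sumR N (fun j => cellint x j
           (fun y => f (pev k (u j) y) * dpev k (q j) y * dpev k (v j) y))
      - sumR (pred N) (fun j => favg f k x u j *
           (flux b0 b1 k x q j * jmp k x v j + davg k x v j * jmp k x q j)).

Definition scheme_eq2 (N k : nat) (x : nat -> R) (Phi Hd : R -> R)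
  (u q : Vh) : Prop :=
  forall r : Vh,
    sumR N (fun j => cellint x j (fun y => pev k (q j) y * pev k (r j) y))
    = sumR N (fun j => cellint x j
           (fun y => (Phi y + Hd (pev k (u j) y)) * pev k (r j) y)).

Definition energy2 (N k : nat) (x : nat -> R) (f : R -> R) (b0 : R)
  (u q : Vh) : R :=
  sumR N (fun j => cellint x j (fun y => f (pev k (u j) y) * (dpev k (q j) y) ^ 2))
  + sumR (pred N) (fun j => favg f k x u j * (b0 / meshh x j) * (jmp k x q j) ^ 2).

Definition gdenom (k : nat) (x : nat -> R) (f : R -> R) (u q : Vh) (j : nat) : R :=
  / (2 * meshh x j) *
  (cellint x j (fun y => f (pev k (u j) y) * Rabs (dpev k (q j) y) ^ 2)
   + cellint x (S j) (fun y => f (pev k (u (S j)) y) * Rabs (dpev k (q (S j)) y) ^ 2)).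

Definition gnum (k : nat) (x : nat -> R) (f : R -> R) (b1 : R) (u q : Vh) (j : nat) : R :=
  favg f k x u j * (davg k x q j + b1 / 2 * meshh x j * d2jmp k x q j) ^ 2.

Definition Gamma (N k : nat) (x : nat -> R) (f : R -> R) (b1 : R) (u q : Vh) : R :=
  maxR (pred N) (fun j => gnum k x f b1 u q j / gdenom k x f u q j).

Definition entropy (N k : nat) (x : nat -> R) (Phi H : R -> R) (u : Vh) : R :=
  sumR N (fun j => cellint x j (fun y => Phi y * pev k (u j) y + H (pev k (u j) y))).

(* Main.v *)
Require Import Defs.
From Stdlib Require Import Reals Lra Lia ClassicalEpsilon FunctionalExtensionality.
From Coquelicot Require Import Coquelicot.
Open Scope R_scope.

Lemma cp_plus f g y : continuity_pt f y -> continuity_pt g y -> continuity_pt (fun z => f z + g z) y.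
Proof. intros; apply (continuity_pt_plus f g); auto. Qed.
Lemma cp_mult f g y : continuity_pt f y -> continuity_pt g y -> continuity_pt (fun z => f z * g z) y.
Proof. intros; apply (continuity_pt_mult f g); auto. Qed.
Lemma cp_comp f g y : continuity_pt f y -> continuity_pt g (f y) -> continuity_pt (fun z => g (f z)) y.
Proof. intros; apply (continuity_pt_comp f g); auto. Qed.
Lemma cp_const c y : continuity_pt (fun _ => c) y.
Proof. apply continuity_pt_const; intros a b; reflexivity. Qed.
Lemma cp_id y : continuity_pt (fun z => z) y.
Proof. apply derivable_continuous_pt. exists 1. apply derivable_pt_lim_id. Qed.
Lemma cp_pow n y : continuity_pt (fun z => z ^ n) y.
Proof. apply derivable_continuous_pt. eexists. apply derivable_pt_lim_pow. Qed.
Lemma cp_abs f y : continuity_pt f y -> continuity_pt (fun z => Rabs (f z)) y.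
Proof. intros; apply cp_comp; auto. apply Rcontinuity_abs. Qed.

Lemma cp_poly (g : nat -> R) (m : nat -> nat) k y :
  continuity_pt (fun z => sum_f_R0 (fun i => g i * z ^ m i) k) y.
Proof.
  induction k; simpl.
  - apply cp_mult; [apply cp_const | apply cp_pow].
  - apply cp_plus; auto. apply cp_mult; [apply cp_const | apply cp_pow].
Qed.

Lemma cp_pev k a y : continuity_pt (pev k a) y.
Proof. unfold pev. apply (cp_poly a (fun i => i)). Qed.
Lemma cp_dpev k a y : continuity_pt (dpev k a) y.
Proof. unfold dpev. apply (cp_poly (fun i => INR i * a i) pred). Qed.

Definition CC (g : R -> R) lo hi := forall y, lo <= y <= hi -> continuity_pt g y.

Lemma Rint_RInt g lo hi : lo <= hi -> CC g lo hi -> Rint g lo hi = RInt g lo hi /\ ex_RInt g lo hi.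
Proof.
  intros Hle Hc.
  assert (pr := @continuity_implies_RiemannInt g lo hi Hle Hc).
  split; [| apply ex_RInt_Reals_1; exact pr].
  unfold Rint.
  destruct (epsilon_spec (inhabits 0) (fun I => exists pr : Riemann_integrable g lo hi, RiemannInt pr = I))
    as [pr' Hpr']. exists (RiemannInt pr); exists pr; reflexivity.
  rewrite <- Hpr'. symmetry. apply RInt_Reals.
Qed.

Lemma RInt_lin f g lo hi c : ex_RInt f lo hi -> ex_RInt g lo hi ->
  RInt (fun y => f y - c * g y) lo hi = RInt f lo hi - c * RInt g lo hi.
Proof.
  intros Hf Hg.
  transitivity (RInt (fun y => minus (f y) (scal c (g y))) lo hi); [reflexivity|].
  rewrite (@RInt_minus R_CompleteNormedModule f (fun y => scal c (g y))); [| auto | apply ex_RInt_scal; auto].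
  rewrite (@RInt_scal R_CompleteNormedModule); auto.
Qed.

Lemma pev_lin k a b c h y :
  pev k a y - pev k b y - h * pev k c y = pev k (fun i => a i - b i - h * c i) y.
Proof. unfold pev; induction k; simpl; [ring | rewrite <- IHk; ring]. Qed.

Lemma pev_sub k a b y : pev k a y - pev k b y = pev k (fun i => a i - b i) y.
Proof. unfold pev; induction k; simpl; [ring | rewrite <- IHk; ring]. Qed.

Lemma pev_bound k e y E Y : (forall i, (i <= k)%nat -> Rabs (e i) <= E) ->
  Rabs y <= Y -> 1 <= Y -> Rabs (pev k e y) <= INR (S k) * E * Y ^ k.
Proof.
  intros He Hy HY.
  assert (HE : 0 <= E) by (specialize (He 0%nat ltac:(lia)); pose proof (Rabs_pos (e 0%nat)); lra).
  assert (Hp : forall i, (i <= k)%nat -> Rabs (e i * y ^ i) <= E * Y ^ k).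
  { intros i Hi. rewrite Rabs_mult, <- RPow_abs. apply Rmult_le_compat; auto.
    apply Rabs_pos. apply pow_le, Rabs_pos.
    apply Rle_trans with (Y ^ i). apply pow_incr; split; auto; apply Rabs_pos.
    apply Rle_pow; auto. }
  unfold pev.
  assert (G : forall m, (m <= k)%nat -> Rabs (sum_f_R0 (fun i => e i * y ^ i) m) <= INR (S m) * E * Y ^ k).
  { induction m; intros Hm.
    - simpl sum_f_R0. apply Rle_trans with (E * Y ^ k); [apply Hp; lia | simpl; lra].
    - change (sum_f_R0 (fun i => e i * y ^ i) (S m)) with
        (sum_f_R0 (fun i => e i * y ^ i) m + e (S m) * y ^ (S m)).
      eapply Rle_trans; [apply Rabs_triang|].
      pose proof (IHm ltac:(lia)). pose proof (Hp (S m) Hm).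
      rewrite (S_INR (S m)).
      replace ((INR (S m) + 1) * E * Y ^ k) with (INR (S m) * E * Y ^ k + E * Y ^ k) by ring. lra. }
  apply G; lia.
Qed.

Lemma finite_delta (k : nat) (P : nat -> R -> Prop) :
  (forall i, (i <= k)%nat -> exists d, 0 < d /\ forall h, Rabs h < d -> P i h) ->
  exists d, 0 < d /\ forall h, Rabs h < d -> forall i, (i <= k)%nat -> P i h.
Proof.
  induction k; intros H.
  - destruct (H 0%nat (le_n _)) as [d [Hd Hh]]. exists d; split; auto.
    intros h Hh' i Hi. assert (i = 0%nat) by lia; subst; auto.
  - destruct IHk as [d1 [Hd1 H1]]. { intros; apply H; lia. }
    destruct (H (S k) (le_n _)) as [d2 [Hd2 H2]].
    exists (Rmin d1 d2); split. apply Rmin_pos; auto.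
    intros h Hh i Hi.
    assert (Rabs h < d1) by (pose proof (Rmin_l d1 d2); lra).
    assert (Rabs h < d2) by (pose proof (Rmin_r d1 d2); lra).
    destruct (Nat.eq_dec i (S k)) as [->|]; auto. apply H1; auto; lia.
Qed.

Lemma finite_bound (k : nat) (c : nat -> R) :
  exists C, 0 <= C /\ forall i, (i <= k)%nat -> Rabs (c i) <= C.
Proof.
  induction k.
  - exists (Rabs (c 0%nat)); split; [apply Rabs_pos|]. intros i Hi; assert (i=0%nat) by lia; subst; lra.
  - destruct IHk as [C [HC H]]. exists (Rmax C (Rabs (c (S k)))); split.
    eapply Rle_trans; [exact HC| apply Rmax_l].
    intros i Hi. destruct (Nat.eq_dec i (S k)) as [->|]. apply Rmax_r.
    eapply Rle_trans; [apply H; lia| apply Rmax_l].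
Qed.

Lemma mvt_bound (H Hd : R -> R) m M p d eps dl :
  0 < m -> (forall y, 0 < y -> derivable_pt_lim H y (Hd y)) ->
  (forall z w, m/2 <= z <= M + m/2 -> m/2 <= w <= M + m/2 -> Rabs (z - w) < dl ->
     Rabs (Hd z - Hd w) < eps) ->
  m <= p <= M -> Rabs d < m/2 -> Rabs d < dl ->
  Rabs (H (p+d) - H p - Hd p * d) <= eps * Rabs d.
Proof.
  intros Hm HH Huc Hp Hd1 Hd2.
  destruct (Rtotal_order d 0) as [Hneg|[Hz|Hpos]].
  - destruct (MVT_cor2 H Hd (p+d) p) as [c [Hc1 Hc2]]. lra.
    { intros c Hc. apply HH. rewrite Rabs_left in Hd1 by lra. lra. }
    rewrite Rabs_left in Hd1, Hd2 by lra.
    replace (H (p + d) - H p - Hd p * d) with ((Hd c - Hd p) * d) by lra.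
    rewrite Rabs_mult. apply Rmult_le_compat_r; [apply Rabs_pos|].
    left. apply Huc; try lra. rewrite Rabs_left; lra.
  - subst. replace (H (p + 0) - H p - Hd p * 0) with 0 by (rewrite Rplus_0_r; ring).
    rewrite Rabs_R0, Rmult_0_r; lra.
  - destruct (MVT_cor2 H Hd p (p+d)) as [c [Hc1 Hc2]]. lra.
    { intros c Hc. apply HH. lra. }
    rewrite Rabs_right in Hd1, Hd2 by lra.
    replace (H (p + d) - H p - Hd p * d) with ((Hd c - Hd p) * d) by lra.
    rewrite Rabs_mult. apply Rmult_le_compat_r; [apply Rabs_pos|].
    left. apply Huc; try lra. rewrite Rabs_right; lra.
Qed.

Lemma RInt_sub f g lo hi : ex_RInt f lo hi -> ex_RInt g lo hi ->
  RInt (fun y => f y - g y) lo hi = RInt f lo hi - RInt g lo hi /\ ex_RInt (fun y => f y - g y) lo hi.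
Proof.
  intros Hf Hg. split.
  - transitivity (RInt (fun y => minus (f y) (g y)) lo hi); [reflexivity|].
    rewrite (@RInt_minus R_CompleteNormedModule f g); auto.
  - apply (@ex_RInt_minus R_NormedModule f g); auto.
Qed.

Lemma RInt_lin3 f g l lo hi c : ex_RInt f lo hi -> ex_RInt g lo hi -> ex_RInt l lo hi ->
  RInt (fun y => f y - g y - c * l y) lo hi = RInt f lo hi - RInt g lo hi - c * RInt l lo hi
  /\ ex_RInt (fun y => f y - g y - c * l y) lo hi.
Proof.
  intros Hf Hg Hl. destruct (RInt_sub f g lo hi Hf Hg) as [E1 X1].
  split.
  - rewrite (RInt_lin (fun y => f y - g y) l lo hi c X1 Hl). rewrite E1. reflexivity.
  - apply (@ex_RInt_minus R_NormedModule (fun y => f y - g y) (fun y => scal c (l y))); auto.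
    apply ex_RInt_scal; auto.
Qed.

Lemma abs_le_max y lo hi : lo <= y <= hi -> Rabs y <= Rmax (Rabs lo) (Rabs hi).
Proof.
  intros [H1 H2]. destruct (Rcase_abs y).
  - rewrite Rabs_left by lra. eapply Rle_trans; [|apply Rmax_l].
    rewrite <- Rabs_Ropp. eapply Rle_trans; [|apply Rle_abs]. lra.
  - rewrite Rabs_right by lra. eapply Rle_trans; [|apply Rmax_r].
    eapply Rle_trans; [|apply Rle_abs]. lra.
Qed.

Lemma quot_bound a h c e : h <> 0 -> Rabs (a / h - c) < e -> Rabs (a - h * c) <= e * Rabs h.
Proof.
  intros Hh Ha. replace (a - h * c) with (h * (a / h - c)) by (field; auto).
  rewrite Rabs_mult. rewrite Rmult_comm. apply Rmult_le_compat_r; [apply Rabs_pos| lra].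
Qed.

Lemma cell_deriv k lo hi t (Phi H Hd : R -> R) (A : R -> nat -> R) (dA : nat -> R) :
  lo < hi -> CC Phi lo hi ->
  (forall y, 0 < y -> derivable_pt_lim H y (Hd y)) ->
  (forall y, 0 < y -> continuity_pt Hd y) ->
  (forall i, (i <= k)%nat -> derivable_pt_lim (fun s => A s i) t (dA i)) ->
  (forall y, lo <= y <= hi -> 0 < pev k (A t) y) ->
  derivable_pt_lim (fun s => Rint (fun y => Phi y * pev k (A s) y + H (pev k (A s) y)) lo hi) t
    (Rint (fun y => (Phi y + Hd (pev k (A t) y)) * pev k dA y) lo hi).
Proof.
  intros Hlh HPhi HH HHd HA Hpos.
  assert (HHc : forall y, 0 < y -> continuity_pt H y).
  { intros y Hy. apply derivable_continuous_pt. exists (Hd y). apply HH; auto. }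
  set (P := pev k (A t)).
  destruct (continuity_ab_min P lo hi) as [ymin [Hmin Hymin]]; [lra | intros; apply cp_pev |].
  destruct (continuity_ab_maj P lo hi) as [ymax [Hmax Hymax]]; [lra | intros; apply cp_pev |].
  set (m := P ymin). set (M := P ymax).
  assert (Hm : 0 < m) by (apply Hpos; auto).
  assert (HmM : m <= M) by (unfold m, M; apply Hmin; auto).
  destruct (continuity_ab_maj (fun y => Rabs (Phi y)) lo hi) as [yp [Hphi _]];
    [lra | intros; apply cp_abs; apply HPhi; auto |].
  set (BPhi := Rabs (Phi yp)).
  destruct (continuity_ab_maj (fun z => Rabs (Hd z)) m M) as [zh [Hhd _]];
    [lra | intros; apply cp_abs; apply HHd; lra |].
  set (BHd := Rabs (Hd zh)).
  destruct (finite_bound k dA) as [Cd [HCd HdA]].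
  set (Y := Rmax 1 (Rmax (Rabs lo) (Rabs hi))).
  assert (HY1 : 1 <= Y) by apply Rmax_l.
  assert (HY : forall y, lo <= y <= hi -> Rabs y <= Y).
  { intros y Hy. eapply Rle_trans; [apply abs_le_max; eauto| apply Rmax_r]. }
  set (K := INR (S k) * Y ^ k).
  assert (HK : 0 < K).
  { apply Rmult_lt_0_compat; [apply lt_0_INR; lia | apply pow_lt; lra]. }
  assert (HBPhi : 0 <= BPhi) by apply Rabs_pos.
  assert (HBHd : 0 <= BHd) by apply Rabs_pos.
  set (L := hi - lo).
  intros eps Heps.
  set (W := L * K * (BPhi + BHd + Cd + 1)).
  assert (HW : 0 < W).
  { unfold W, L. apply Rmult_lt_0_compat; [apply Rmult_lt_0_compat; lra | lra]. }
  set (e2 := eps / (2 * W)).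
  assert (He2 : 0 < e2) by (unfold e2; apply Rdiv_lt_0_compat; lra).
  set (e1 := Rmin 1 e2).
  assert (He1 : 0 < e1) by (apply Rmin_pos; lra).
  assert (He11 : e1 <= 1) by apply Rmin_l.
  assert (He12 : e1 <= e2) by apply Rmin_r.
  assert (Huc := Heine Hd (fun c => m/2 <= c <= M + m/2) (compact_P3 _ _)).
  destruct (Huc (fun c Hc => HHd c ltac:(lra)) (mkposreal e2 He2)) as [[dl Hdl] Hucd].
  simpl in Hucd.
  destruct (finite_delta k (fun i h => h <> 0 -> Rabs ((A (t+h) i - A t i)/h - dA i) < e1))
    as [d1 [Hd1 Hcoef]].
  { intros i Hi. destruct (HA i Hi e1 He1) as [[d Hdp] Hh]. exists d; split; auto. }
  set (d2 := Rmin (m/2) dl / (K * (Cd + 1))).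
  assert (Hd2 : 0 < d2).
  { unfold d2. apply Rdiv_lt_0_compat. apply Rmin_pos; lra. apply Rmult_lt_0_compat; lra. }
  exists (mkposreal (Rmin d1 d2) (Rmin_pos _ _ Hd1 Hd2)).
  intros h Hh0 Hh. simpl in Hh.
  assert (Hhd1 : Rabs h < d1) by (pose proof (Rmin_l d1 d2); lra).
  assert (Hhd2 : Rabs h < d2) by (pose proof (Rmin_r d1 d2); lra).
  assert (Hhabs : 0 < Rabs h) by (apply Rabs_pos_lt; auto).
  assert (Hc1 : forall i, (i <= k)%nat -> Rabs (A (t+h) i - A t i - h * dA i) <= e1 * Rabs h).
  { intros i Hi. apply quot_bound; [exact Hh0 | apply Hcoef; auto]. }
  assert (Hc2 : forall i, (i <= k)%nat -> Rabs (A (t+h) i - A t i) <= (Cd + 1) * Rabs h).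
  { intros i Hi. pose proof (Hc1 i Hi). pose proof (HdA i Hi).
    replace (A (t+h) i - A t i) with ((A (t+h) i - A t i - h * dA i) + h * dA i) by ring.
    eapply Rle_trans; [apply Rabs_triang|]. rewrite Rabs_mult.
    assert (Rabs h * Rabs (dA i) <= Rabs h * Cd) by (apply Rmult_le_compat_l; auto; apply Rabs_pos).
    assert (e1 * Rabs h <= 1 * Rabs h) by (apply Rmult_le_compat_r; lra).
    lra. }
  set (D := fun y => pev k (fun i => A (t+h) i - A t i) y).
  set (P' := pev k dA).
  assert (HD1 : forall y, lo <= y <= hi -> Rabs (D y - h * P' y) <= K * (e1 * Rabs h)).
  { intros y Hy. unfold D, P'. rewrite <- pev_sub, pev_lin.
    unfold K. rewrite Rmult_assoc, (Rmult_comm (Y ^ k)), <- Rmult_assoc.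
    apply pev_bound; auto. }
  assert (HD2 : forall y, lo <= y <= hi -> Rabs (D y) <= K * ((Cd + 1) * Rabs h)).
  { intros y Hy. unfold D.
    unfold K. rewrite Rmult_assoc, (Rmult_comm (Y ^ k)), <- Rmult_assoc.
    apply pev_bound; auto. }
  assert (HD3 : forall y, lo <= y <= hi -> Rabs (D y) < Rmin (m/2) dl).
  { intros y Hy. eapply Rle_lt_trans; [apply HD2; auto|].
    assert (HKC : 0 < K * (Cd + 1)) by (apply Rmult_lt_0_compat; lra).
    replace (Rmin (m/2) dl) with (K * (Cd + 1) * d2) by (unfold d2; field; lra).
    rewrite <- Rmult_assoc. apply Rmult_lt_compat_l; auto. }
  assert (HPs : forall y, pev k (A (t+h)) y = P y + D y).
  { intros y. unfold D, P. rewrite <- pev_sub. ring. }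
  assert (Herr : forall y, lo <= y <= hi ->
    Rabs ((Phi y * pev k (A (t+h)) y + H (pev k (A (t+h)) y))
          - (Phi y * pev k (A t) y + H (pev k (A t) y))
          - h * ((Phi y + Hd (pev k (A t) y)) * pev k dA y))
    <= K * Rabs h * (BPhi + BHd + Cd + 1) * e2).
  { intros y Hy. rewrite HPs. change (pev k (A t) y) with (P y). change (pev k dA y) with (P' y).
    assert (HPy : m <= P y <= M) by (split; [apply Hmin | apply Hmax]; auto).
    pose proof (HD3 y Hy) as HD3y.
    assert (HD3a : Rabs (D y) < m/2) by (pose proof (Rmin_l (m/2) dl); lra).
    assert (HD3b : Rabs (D y) < dl) by (pose proof (Rmin_r (m/2) dl); lra).
    pose proof (mvt_bound H Hd m M (P y) (D y) e2 dl Hm HH Hucd HPy HD3a HD3b) as Hmvt.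
    replace (Phi y * (P y + D y) + H (P y + D y) - (Phi y * P y + H (P y)) - h * ((Phi y + Hd (P y)) * P' y))
      with (Phi y * (D y - h * P' y) + (H (P y + D y) - H (P y) - Hd (P y) * D y) + Hd (P y) * (D y - h * P' y))
      by ring.
    pose proof (HD1 y Hy) as HD1y. pose proof (HD2 y Hy) as HD2y.
    assert (HPhiy : Rabs (Phi y) <= BPhi) by (apply Hphi; auto).
    assert (HHdy : Rabs (Hd (P y)) <= BHd) by (apply Hhd; auto).
    eapply Rle_trans; [apply Rabs_triang|].
    eapply Rle_trans; [apply Rplus_le_compat_r; apply Rabs_triang|].
    rewrite !Rabs_mult.
    set (u := K * Rabs h).
    assert (Hu : 0 < u) by (unfold u; apply Rmult_lt_0_compat; auto).
    assert (T1 : Rabs (Phi y) * Rabs (D y - h * P' y) <= BPhi * (e2 * u)).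
    { apply Rmult_le_compat; try apply Rabs_pos; auto.
      eapply Rle_trans; [exact HD1y|]. unfold u.
      replace (K * (e1 * Rabs h)) with (e1 * (K * Rabs h)) by ring.
      apply Rmult_le_compat_r; [left; exact Hu | exact He12]. }
    assert (T3 : Rabs (Hd (P y)) * Rabs (D y - h * P' y) <= BHd * (e2 * u)).
    { apply Rmult_le_compat; try apply Rabs_pos; auto.
      eapply Rle_trans; [exact HD1y|]. unfold u.
      replace (K * (e1 * Rabs h)) with (e1 * (K * Rabs h)) by ring.
      apply Rmult_le_compat_r; [left; exact Hu | exact He12]. }
    assert (T2 : e2 * Rabs (D y) <= e2 * ((Cd + 1) * u)).
    { apply Rmult_le_compat_l; [lra|]. unfold u.
      replace ((Cd + 1) * (K * Rabs h)) with (K * ((Cd + 1) * Rabs h)) by ring. auto. }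
    replace (u * (BPhi + BHd + Cd + 1) * e2) with (BPhi * (e2 * u) + e2 * ((Cd + 1) * u) + BHd * (e2 * u)) by ring.
    lra. }
  assert (Hpos1 : forall y, lo <= y <= hi -> 0 < pev k (A (t+h)) y).
  { intros y Hy. rewrite HPs.
    assert (HPy : m <= P y) by (apply Hmin; auto).
    pose proof (HD3 y Hy) as HD3y. pose proof (Rmin_l (m/2) dl).
    destruct (Rabs_def2 (D y) (m/2)) as [_ Hl]; lra. }
  assert (CC1 : CC (fun y => Phi y * pev k (A (t+h)) y + H (pev k (A (t+h)) y)) lo hi).
  { intros y Hy. apply cp_plus; [apply cp_mult; [apply HPhi; auto | apply cp_pev]|].
    apply cp_comp; [apply cp_pev | apply HHc; auto]. }
  assert (CC0 : CC (fun y => Phi y * pev k (A t) y + H (pev k (A t) y)) lo hi).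
  { intros y Hy. apply cp_plus; [apply cp_mult; [apply HPhi; auto | apply cp_pev]|].
    apply cp_comp; [apply cp_pev | apply HHc; auto]. }
  assert (CCL : CC (fun y => (Phi y + Hd (pev k (A t) y)) * pev k dA y) lo hi).
  { intros y Hy. apply cp_mult; [|apply cp_pev]. apply cp_plus; [apply HPhi; auto|].
    apply cp_comp; [apply cp_pev | apply HHd; auto]. }
  unfold P, P'. cbv beta.
  destruct (Rint_RInt _ lo hi ltac:(lra) CC1) as [E1 X1].
  destruct (Rint_RInt _ lo hi ltac:(lra) CC0) as [E0 X0].
  destruct (Rint_RInt _ lo hi ltac:(lra) CCL) as [EL XL].
  rewrite E1, E0, EL.
  destruct (RInt_lin3 _ _ _ lo hi h X1 X0 XL) as [Eq Xe].
  match goal with |- Rabs ((?a - ?b) / h - ?c) < _ =>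
    replace ((a - b) / h - c) with ((a - b - h * c) / h) by (field; auto) end.
  rewrite <- Eq. rewrite Rabs_div by auto.
  pose proof (abs_RInt_le_const _ lo hi _ ltac:(lra) Xe Herr) as Hb.
  apply Rle_lt_trans with ((hi - lo) * (K * Rabs h * (BPhi + BHd + Cd + 1) * e2) / Rabs h).
  { unfold Rdiv. apply Rmult_le_compat_r; [left; apply Rinv_0_lt_compat; auto | exact Hb]. }
  replace ((hi - lo) * (K * Rabs h * (BPhi + BHd + Cd + 1) * e2) / Rabs h) with (W * e2)
    by (unfold W, L; field; lra).
  unfold e2. replace (W * (eps / (2 * W))) with (eps / 2) by (field; lra). lra.
Qed.

Lemma iface F hh b0 G c D J dav b1 d2 Aj Aj1 :
  0 <= F -> 0 < hh -> 0 < b0 -> 0 <= G -> c = sqrt (G / b0) -> 0 < D ->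
  F * (dav + b1 / 2 * hh * d2) ^ 2 / D <= G -> D = / (2 * hh) * (Aj + Aj1) ->
  (1 - c) * (F * (b0 / hh) * J ^ 2) - c * ((Aj + Aj1) / 2)
  <= F * ((b0 * J / hh + dav + b1 * hh * d2) * J + dav * J).
Proof.
  intros HF Hh Hb HG Hc HD HB HDe.
  set (B := dav + b1 / 2 * hh * d2) in *.
  assert (HAD : (Aj + Aj1) / 2 = hh * D) by (rewrite HDe; field; lra).
  rewrite HAD.
  replace (F * ((b0 * J / hh + dav + b1 * hh * d2) * J + dav * J))
    with (F * (b0 / hh) * J ^ 2 + 2 * (F * B * J)) by (unfold B; field; lra).
  assert (HFB : F * B ^ 2 <= G * D).
  { apply (Rmult_le_compat_r D) in HB; [|lra]. unfold Rdiv in HB.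
    rewrite Rmult_assoc, Rinv_l, Rmult_1_r in HB by lra. exact HB. }
  assert (Hc0 : 0 <= c) by (rewrite Hc; apply sqrt_pos).
  assert (Hc2 : c * c * b0 = G).
  { rewrite Hc, sqrt_sqrt. field; lra. apply Rdiv_le_0_compat; lra. }
  assert (HFB0 : 0 <= F * B ^ 2) by (apply Rmult_le_pos; auto; apply pow2_ge_0).
  destruct (Req_dec c 0) as [Hc00|Hcp].
  - assert (HG0 : G = 0) by (rewrite Hc00 in Hc2; lra). rewrite HG0 in HFB.
    assert (HFB2 : F * B ^ 2 = 0) by lra.
    assert (HFB1 : (F * B) ^ 2 = 0) by (replace ((F*B)^2) with (F * (F * B ^ 2)) by ring; rewrite HFB2; ring).
    assert (HFB3 : F * B = 0) by (apply Rsqr_0_uniq; unfold Rsqr; rewrite <- HFB1; ring).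
    rewrite Hc00. replace (F * B * J) with ((F * B) * J) by ring. rewrite HFB3.
    assert (0 <= hh * D) by (apply Rmult_le_pos; lra). lra.
  - assert (Hcpos : 0 < c) by lra.
    assert (Hprod : 0 <= c * b0 * hh * (2 * (F * B * J) + c * (F * (b0 / hh) * J ^ 2) + c * (hh * D))).
    { replace (c * b0 * hh * (2 * (F * B * J) + c * (F * (b0 / hh) * J ^ 2) + c * (hh * D)))
        with (F * (c * b0 * J + hh * B) ^ 2 + hh ^ 2 * (c * c * b0 * D - F * B ^ 2)) by (field; lra).
      rewrite Hc2. apply Rplus_le_le_0_compat.
      apply Rmult_le_pos; auto; apply pow2_ge_0.
      apply Rmult_le_pos; [apply pow2_ge_0 | lra]. }
    assert (Hpos3 : 0 < c * b0 * hh) by (apply Rmult_lt_0_compat; [apply Rmult_lt_0_compat|]; lra).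
    assert (Hin : 0 <= 2 * (F * B * J) + c * (F * (b0 / hh) * J ^ 2) + c * (hh * D)).
    { apply (Rmult_le_reg_l (c * b0 * hh)); auto. rewrite Rmult_0_r. exact Hprod. }
    lra.
Qed.

Lemma sumR_ext n F G : (forall j, (1 <= j <= n)%nat -> F j = G j) -> sumR n F = sumR n G.
Proof. induction n; intros H; simpl; auto. rewrite IHn, (H (S n)); [reflexivity| lia |]. intros; apply H; lia. Qed.

Lemma sumR_le n F G : (forall j, (1 <= j <= n)%nat -> F j <= G j) -> sumR n F <= sumR n G.
Proof. induction n; intros H; simpl; [lra|]. pose proof (H (S n) ltac:(lia)).
  assert (sumR n F <= sumR n G) by (apply IHn; intros; apply H; lia). lra. Qed.

Lemma sumR_lin n F G a b : sumR n (fun j => a * F j - b * G j) = a * sumR n F - b * sumR n G.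
Proof. induction n; simpl; [ring | rewrite IHn; ring]. Qed.

Lemma sumR_nonneg n F : (forall j, (1 <= j <= n)%nat -> 0 <= F j) -> 0 <= sumR n F.
Proof. induction n; intros H; simpl; [lra|]. pose proof (H (S n) ltac:(lia)).
  assert (0 <= sumR n F) by (apply IHn; intros; apply H; lia). lra. Qed.

Lemma sumR_deriv n (F : R -> nat -> R) G t :
  (forall j, (1 <= j <= n)%nat -> derivable_pt_lim (fun s => F s j) t (G j)) ->
  derivable_pt_lim (fun s => sumR n (F s)) t (sumR n G).
Proof.
  induction n; intros H; simpl.
  - apply (derivable_pt_lim_const 0 t).
  - apply (derivable_pt_lim_plus (fun s => sumR n (F s)) (fun s => F s (S n))).
    apply IHn; intros; apply H; lia. apply H; lia.
Qed.

Lemma sum_pairs m A : sumR m (fun j => (A j + A (S j)) / 2) = sumR (S m) A - (A 1%nat + A (S m)) / 2.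
Proof. induction m; simpl; [field | rewrite IHm; simpl; field]. Qed.

Lemma maxR_ge n F j : (1 <= j <= n)%nat -> F j <= maxR n F.
Proof.
  induction n as [|n IH]; intros Hj; [lia|].
  destruct n as [|n'].
  - assert (j = 1%nat) by lia; subst; simpl; lra.
  - change (maxR (S (S n')) F) with (Rmax (maxR (S n') F) (F (S (S n')))).
    destruct (Nat.eq_dec j (S (S n'))) as [->|]. apply Rmax_r.
    eapply Rle_trans; [apply IH; lia | apply Rmax_l].
Qed.

Lemma xmono (x : nat -> R) N : (forall j, (j < N)%nat -> x j < x (S j)) ->
  forall i j, (i <= j <= N)%nat -> x i <= x j.
Proof.
  intros H i j Hij. induction j; [assert (i = 0%nat) by lia; subst; lra|].
  destruct (Nat.eq_dec i (S j)) as [->|]; [lra|].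
  pose proof (H j ltac:(lia)). pose proof (IHj ltac:(lia)). lra.
Qed.

Theorem theorem3p1
  (a b : R) (N k : nat) (x : nat -> R)
  (Phi f H Hd : R -> R) (b0 b1 T0 T1 : R) (U dU Q : R -> Vh) :
  (1 <= k)%nat -> (2 <= N)%nat ->
  x 0%nat = a -> x N = b -> (forall j, (j < N)%nat -> x j < x (S j)) ->
  (forall y, a <= y <= b -> continuity_pt Phi y) ->
  (forall y, 0 < y -> continuity_pt f y) ->
  (forall y, 0 < y -> derivable_pt_lim H y (Hd y)) ->
  (forall y, 0 < y -> continuity_pt Hd y) ->
  T0 < T1 ->
  (forall t, T0 < t < T1 -> forall j i, (1 <= j <= N)%nat -> (i <= k)%nat ->
     derivable_pt_lim (fun s => U s j i) t (dU t j i)) ->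
  (forall t, T0 < t < T1 -> forall j, (1 <= j <= N)%nat ->
     forall y, x (pred j) <= y <= x j ->
       0 < pev k (U t j) y /\ 0 <= f (pev k (U t j) y)) ->
  (forall t, T0 < t < T1 -> scheme_eq1 N k x f b0 b1 (dU t) (U t) (Q t)) ->
  (forall t, T0 < t < T1 -> scheme_eq2 N k x Phi Hd (U t) (Q t)) ->
  (forall t, T0 < t < T1 -> forall j, (1 <= j <= pred N)%nat ->
     0 < gdenom k x f (U t) (Q t) j) ->
  forall t, T0 < t < T1 ->
    Gamma N k x f b1 (U t) (Q t) < b0 ->
    let gamma := 1 - sqrt (Gamma N k x f b1 (U t) (Q t) / b0) in
    0 < gamma <= 1 /\
    exists l, derivable_pt_lim (fun s => entropy N k x Phi H (U s)) t l /\
      l <= - gamma * energy2 N k x f b0 (U t) (Q t).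
Proof.
  intros Hk HN Hx0 HxN Hinc HPhi Hf HH HHd HT0 HT HU Heq1 Heq2 Hgd t Ht HG gamma.
  pose proof (xmono x N Hinc) as Hxm.
  assert (Hcell : forall j, (1 <= j <= N)%nat -> x (pred j) < x j).
  { intros j Hj. pose proof (Hinc (pred j) ltac:(lia)). replace (S (pred j)) with j in * by lia. auto. }
  set (u := U t) in *. set (q := Q t) in *.
  set (G := Gamma N k x f b1 u q) in *.
  assert (Hfavg : forall j, (1 <= j <= pred N)%nat -> 0 <= favg f k x u j).
  { intros j Hj. unfold favg, vp, vm.
    assert (Hx1 : x (pred j) <= x j) by (apply Hxm; lia).
    assert (Hx2 : x j <= x (S j)) by (apply Hxm; lia).
    destruct (HU t Ht (S j) ltac:(lia) (x j) ltac:(simpl; lra)) as [_ H1].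
    destruct (HU t Ht j ltac:(lia) (x j) ltac:(lra)) as [_ H2].
    fold u in H1, H2. lra. }
  assert (Hmesh : forall j, (1 <= j <= pred N)%nat -> 0 < meshh x j).
  { intros j Hj. unfold meshh. pose proof (Hcell j ltac:(lia)). pose proof (Hinc j ltac:(lia)). lra. }
  assert (Hratio : forall j, (1 <= j <= pred N)%nat -> gnum k x f b1 u q j / gdenom k x f u q j <= G).
  { intros j Hj. unfold G, Gamma. apply (maxR_ge (pred N) (fun j => gnum k x f b1 u q j / gdenom k x f u q j)); auto. }
  assert (Hratio0 : forall j, (1 <= j <= pred N)%nat -> 0 <= gnum k x f b1 u q j / gdenom k x f u q j).
  { intros j Hj. apply Rdiv_le_0_compat; [|apply Hgd; auto].
    unfold gnum. apply Rmult_le_pos; [apply Hfavg; auto | apply pow2_ge_0]. }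
  assert (HG0 : 0 <= G) by (eapply Rle_trans; [apply (Hratio0 1%nat); lia | apply Hratio; lia]).
  assert (Hb0 : 0 < b0) by lra.
  set (c := sqrt (G / b0)).
  assert (Hc0 : 0 <= c) by apply sqrt_pos.
  assert (Hc1 : c < 1).
  { unfold c. rewrite <- sqrt_1. apply sqrt_lt_1_alt. split. apply Rdiv_le_0_compat; lra.
    apply (Rmult_lt_reg_r b0); auto. unfold Rdiv. rewrite Rmult_assoc, Rinv_l; lra. }
  assert (Hgam : gamma = 1 - c) by reflexivity.
  split; [lra|].
  exists (sumR N (fun j => cellint x j (fun y => (Phi y + Hd (pev k (u j) y)) * pev k (dU t j) y))).
  split.
  { unfold entropy.
    apply (sumR_deriv N (fun s j => cellint x j (fun y => Phi y * pev k (U s j) y + H (pev k (U s j) y)))).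
    intros j Hj. unfold cellint.
    apply (cell_deriv k (x (pred j)) (x j) t Phi H Hd (fun s => U s j) (dU t j)).
    - apply Hcell; auto.
    - intros y Hy. apply HPhi. split.
      + rewrite <- Hx0. apply Rle_trans with (x (pred j)); [apply Hxm; lia | apply Hy].
      + rewrite <- HxN. apply Rle_trans with (x j); [apply Hy | apply Hxm; lia].
    - exact HH.
    - exact HHd.
    - intros i Hi. apply HT; auto.
    - intros y Hy. apply (HU t Ht j Hj y Hy). }
  set (Aj := fun j => cellint x j (fun y => f (pev k (u j) y) * dpev k (q j) y ^ 2)).
  assert (HA0 : forall j, (1 <= j <= N)%nat -> 0 <= Aj j).
  { intros j Hj. unfold Aj, cellint.
    assert (CCj : CC (fun y => f (pev k (u j) y) * dpev k (q j) y ^ 2) (x (pred j)) (x j)).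
    { intros y Hy. apply cp_mult.
      - apply cp_comp; [apply cp_pev | apply Hf; apply (HU t Ht j Hj y Hy)].
      - apply (cp_comp (dpev k (q j)) (fun w => w ^ 2)); [apply cp_dpev | apply cp_pow]. }
    pose proof (Hcell j Hj).
    destruct (Rint_RInt _ (x (pred j)) (x j) ltac:(lra) CCj) as [E X]. rewrite E.
    apply RInt_ge_0; [lra | exact X |].
    intros y Hy. apply Rmult_le_pos; [apply (HU t Ht j Hj y); lra | apply pow2_ge_0]. }
  set (SA := sumR N Aj).
  set (T := fun j => favg f k x u j * (b0 / meshh x j) * jmp k x q j ^ 2).
  set (Sfj := sumR (pred N) T).
  set (SI := sumR (pred N) (fun j => favg f k x u j *
           (flux b0 b1 k x q j * jmp k x q j + davg k x q j * jmp k x q j))).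
  assert (HE : energy2 N k x f b0 u q = SA + Sfj) by reflexivity.
  assert (Hl : sumR N (fun j => cellint x j (fun y => (Phi y + Hd (pev k (u j) y)) * pev k (dU t j) y))
               = - SA - SI).
  { pose proof (Heq2 t Ht (dU t)) as E2. fold u q in E2. rewrite <- E2.
    transitivity (sumR N (fun j => cellint x j (fun y => pev k (dU t j) y * pev k (q j) y))).
    { apply sumR_ext; intros j Hj. unfold cellint. f_equal. apply functional_extensionality; intros y; ring. }
    pose proof (Heq1 t Ht (Q t)) as E1. fold u q in E1. rewrite E1. unfold SI. f_equal. f_equal.
    apply sumR_ext; intros j Hj. unfold Aj, cellint. f_equal. apply functional_extensionality; intros y; ring. }
  assert (HSI : sumR (pred N) (fun j => (1 - c) * T j - c * ((Aj j + Aj (S j)) / 2)) <= SI).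
  { apply sumR_le. intros j Hj. unfold T. unfold flux.
    apply (iface _ _ b0 G c (gdenom k x f u q j)); auto.
    - apply Hgd; auto.
    - apply (Hratio j Hj).
    - unfold gdenom, Aj, cellint. f_equal. f_equal; f_equal; apply functional_extensionality; intros y;
      rewrite pow2_abs; reflexivity. }
  rewrite sumR_lin, sum_pairs in HSI.
  replace (S (pred N)) with N in HSI by lia. fold Sfj SA in HSI.
  pose proof (HA0 1%nat ltac:(lia)). pose proof (HA0 N ltac:(lia)).
  assert (0 <= c * ((Aj 1%nat + Aj N) / 2)) by (apply Rmult_le_pos; lra).
  rewrite Hl, HE, Hgam.
  lra.
Qed.
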